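(* Let $(\lambda,\mu,\nu,b,c)$ be a compatible tower with $\nu=(\nu_1,\dots,\nu_r)$. Let \[ \lambda'=\Big\langle\bigcup_{i=1}^r(\nu_i+b_i)\Big\rangle,\qquad \mu'=\Big\langle\bigcup_{i=1}^r(\nu_i+c_i)\Big\rangle . \] Then $(\lambda',\mu',\nu,b,c)$ is a compatible scaffolded tower, and $(\lambda',\mu',\nu,b,c)\le(\lambda,\mu,\nu,b,c)$.
   Context: $\mathbb{N}^3$ carries the componentwise partial order. A $3$-dimensional Young diagram is a finite down-closed subset of $\mathbb{N}^3$. A tower is a triple $(\lambda,\nu,b)$ with $\lambda$ a $3$-dimensional Young diagram, $\nu=(\nu_1,\dots,\nu_r)$ with $\nu_i=\{(0,0,z): z\in\mathbb{N}, 0\le z<n_i\}$ ($n_i\ge1$), $b_i\in\mathbb{Z}^3$, such that the $\nu_i+b_i$ are pairwise disjoint subsets of $\lambda$ and, for all $w\in\mathbb{N}^3$ and $v_i\in\nu_i$ with $v_i+b_i+w\in\lambda$, $v_i+w\in\nu_i$. A compatible tower $(\lambda,\mu,\nu,b,c)$ is one where $(\lambda,\nu,b)$ and $(\mu,\nu,c)$ are towers. For $T\subseteq\mathbb{N}^3$, its order ideal is $\langle T\rangle=\{p\in\mathbb{N}^3: p\le t \text{ for some } t\in T\}$. A tower $(\lambda,\nu,b)$ is scaffolded if $\lambda=\langle\bigcup_i(\nu_i+b_i)\rangle$; a compatible tower is scaffolded if both $(\lambda,\nu,b)$ and $(\mu,\nu,c)$ are. Partial order on compatible towers: $(\lambda,\mu,\nu,b,c)\le(\lambda',\mu',\nu',b',c')$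 if $\lambda\subseteq\lambda'$, $\mu\subseteq\mu'$, writing $\nu=(\nu_i)_{i\in I}$ and $\nu'=(\nu'_j)_{j\in J}$ there is an injection $\iota\colon I\to J$ with $\nu_i\subseteq\nu'_{\iota(i)}$, and $|\lambda\cap\mu|-|\nu|\le|\lambda'\cap\mu'|-|\nu'|$, where $|\nu|=\sum_i|\nu_i|$. *)

(* Defs.v *)
From HB Require Import structures.
From mathcomp Require Import all_boot all_order all_algebra.
From mathcomp Require Import finmap.
Set Implicit Arguments. Unset Strict Implicit. Unset Printing Implicit Defensive.
Import Order.TTheory GRing.Theory Num.Theory.
Local Open Scope fset_scope.

Definition pt := (nat * nat * nat)%type.
Definition vec := (int * int * int)%type.

Definition toZ (p : pt) : vec := (Posz p.1.1, Posz p.1.2, Posz p.2).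
Definition addv (u v : vec) : vec := ((u.1.1 + v.1.1)%R, (u.1.2 + v.1.2)%R, (u.2 + v.2)%R).
Definition addp (p q : pt) : pt := (p.1.1 + q.1.1, p.1.2 + q.1.2, p.2 + q.2)%N.

Definition lep (p q : pt) : bool :=
  [&& (p.1.1 <= q.1.1)%N, (p.1.2 <= q.1.2)%N & (p.2 <= q.2)%N].
Definition lev (u v : vec) : bool :=
  [&& (u.1.1 <= v.1.1)%R, (u.1.2 <= v.1.2)%R & (u.2 <= v.2)%R].

Definition inZ (lam : {fset pt}) (v : vec) : Prop :=
  exists2 q, q \in lam & toZ q = v.

Definition young (lam : {fset pt}) : Prop :=
  forall p q : pt, q \in lam -> lep p q -> p \in lam.

Definition col (n : nat) : {fset pt} := [fset ((0%N, 0%N), z) | z in iota 0 n].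

Definition nu_size (r : nat) (n : 'I_r -> nat) : nat := (\sum_(i < r) #|` col (n i)|)%N.

(* tower (lam, nu, b), with nu_i = col (n i) *)
Definition tower (lam : {fset pt}) (r : nat) (n : 'I_r -> nat) (b : 'I_r -> vec) : Prop :=
  [/\ young lam,
      (forall i, 0 < n i)%N,
      (forall i v, v \in col (n i) -> inZ lam (addv (toZ v) (b i))),
      (forall i j, i <> j -> forall v v', v \in col (n i) -> v' \in col (n j) ->
          addv (toZ v) (b i) <> addv (toZ v') (b j)) &
      (forall i (w v : pt), v \in col (n i) ->
          inZ lam (addv (addv (toZ v) (b i)) (toZ w)) -> addp v w \in col (n i))].

Definition compatible_tower (lam mu : {fset pt}) (r : nat) (n : 'I_r -> nat)
    (b c : 'I_r -> vec) : Prop :=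
  tower lam n b /\ tower mu n c.

Definition order_ideal (T : vec -> Prop) (p : pt) : Prop :=
  exists t, T t /\ lev (toZ p) t.

Definition shifted_union (r : nat) (n : 'I_r -> nat) (b : 'I_r -> vec) (v : vec) : Prop :=
  exists i : 'I_r, exists2 u, u \in col (n i) & v = addv (toZ u) (b i).

Definition scaffolded (lam : {fset pt}) (r : nat) (n : 'I_r -> nat) (b : 'I_r -> vec) : Prop :=
  tower lam n b /\ forall p, p \in lam <-> order_ideal (shifted_union n b) p.

Definition scaffolded_ct (lam mu : {fset pt}) (r : nat) (n : 'I_r -> nat)
    (b c : 'I_r -> vec) : Prop :=
  scaffolded lam n b /\ scaffolded mu n c.

(* partial order on compatible towers (b, c play no role) *)
Definition ct_le (lam mu : {fset pt}) (r : nat) (n : 'I_r -> nat) (b c : 'I_r -> vec)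
    (lam' mu' : {fset pt}) (r' : nat) (n' : 'I_r' -> nat) (b' c' : 'I_r' -> vec) : Prop :=
  [/\ lam `<=` lam', mu `<=` mu',
      (exists iota : 'I_r -> 'I_r', injective iota /\
          forall i, col (n i) `<=` col (n' (iota i))) &
      ((#|` lam `&` mu|%:Z - (nu_size n)%:Z) <= (#|` lam' `&` mu'|%:Z - (nu_size n')%:Z))%R].

(* Main.v *)
Require Import Defs.
From HB Require Import structures.
From mathcomp Require Import all_boot all_order all_algebra.
From mathcomp Require Import finmap.
Import Order.TTheory GRing.Theory Num.Theory.
Local Open Scope fset_scope.

Lemma lev_trans u v w : lev u v -> lev v w -> lev u w.
Proof.
case: u => [[u1 u2] u3]; case: v => [[v1 v2] v3]; case: w => [[w1 w2] w3].
rewrite /lev /= => /and3P[h1 h2 h3] /and3P[k1 k2 k3].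
by apply/and3P; split; [exact: le_trans h1 k1|exact: le_trans h2 k2|exact: le_trans h3 k3].
Qed.

Lemma lev_toZ p q : lev (toZ p) (toZ q) = lep p q.
Proof. by rewrite /lev /lep /= !lez_nat. Qed.

Lemma lev_refl u : lev u u.
Proof. by rewrite /lev !lexx. Qed.

Section K.
Variables (r : nat) (n : 'I_r -> nat) (b : 'I_r -> vec) (lam : {fset pt}).
Hypothesis T : tower lam n b.

Definition Pb (p : pt) : bool :=
  [exists i : 'I_r, has (fun u => lev (toZ p) (Defs.addv (toZ u) (b i))) (Defs.col (n i))].

Definition lamS : {fset pt} := [fset p in lam | Pb p].

Lemma lamS_sub : lamS `<=` lam.
Proof. by apply/fsubsetP => p; rewrite !inE => /andP[]. Qed.

Lemma lamS_iff p : p \in lamS <-> order_ideal (shifted_union n b) p.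
Proof.
case: T => Y _ T3 _ _.
rewrite !inE; split.
  case/andP => _ /existsP[i /hasP[u uin le]].
  exists (Defs.addv (toZ u) (b i)); split => //; exists i; by exists u.
case=> t [[i [u uin ->]] le]; apply/andP; split.
  have [q qin qe] := T3 i u uin.
  by apply: (Y p q qin); rewrite -lev_toZ qe.
by apply/existsP; exists i; apply/hasP; exists u.
Qed.

Lemma lamS_tower : tower lamS n b.
Proof.
case: T => Y T2 T3 T4 T5; split => //.
- move=> p q /lamS_iff [t [ht le]] lpq; apply/lamS_iff; exists t; split => //.
  by apply: lev_trans le; rewrite lev_toZ.
- move=> i v vin; have [q qin qe] := T3 i v vin; exists q => //.
  apply/lamS_iff; exists (Defs.addv (toZ v) (b i)); split; last by rewrite -qe lev_refl.
  by exists i; exists v.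
- move=> i w v vin [q qin qe]; apply: T5 vin _.
  by exists q => //; apply: (fsubsetP lamS_sub).
Qed.
End K.

Theorem lemma3p1 (r : nat) (n : 'I_r -> nat) (b c : 'I_r -> vec) (lam mu : {fset pt}) :
  compatible_tower lam mu n b c ->
  exists lam' mu' : {fset pt},
    (forall p, p \in lam' <-> order_ideal (shifted_union n b) p) /\
    (forall p, p \in mu' <-> order_ideal (shifted_union n c) p) /\
    compatible_tower lam' mu' n b c /\
    scaffolded_ct lam' mu' n b c /\
    ct_le lam' mu' n b c lam mu n b c.
Proof.
case=> Tl Tm.
exists (@lamS _ n b lam), (@lamS _ n c mu).
have I1 := @lamS_iff _ _ _ _ Tl; have I2 := @lamS_iff _ _ _ _ Tm.
have W1 := @lamS_tower _ _ _ _ Tl; have W2 := @lamS_tower _ _ _ _ Tm.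
split => //; split => //; split; first by split.
split; first by split; split.
split; [exact: lamS_sub|exact: lamS_sub| |].
  by exists id; split => // i.
rewrite lerD2r lez_nat; apply: fsubset_leq_card.
by apply: fsetISS; apply: lamS_sub.
Qed.
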